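(* Let $A,B,X\in T^1(\Sigma)$. Then $AX=BX$ if and only if $AX^+=BX^+$; and $XA=XB$ if and only if $X^*A=X^*B$ (all operations pruned).
   Context: Let $\Sigma$ be a set. A $\Sigma$-tree is a finite directed graph whose underlying undirected graph is a tree, edges labelled by elements of $\Sigma$, with distinguished start and end vertices such that there is a (possibly empty) directed path from start to end vertex. A morphism $X\to Y$ maps vertices to vertices and edges to edges, preserving initial vertex, terminal vertex and label of each edge, and mapping start/end vertex to start/end vertex; isomorphisms are morphisms bijective on vertices and edges. A retraction is an idempotent morphism $X\to X$, its image a retract; $X$ is pruned if it admits no non-identity retraction. Every tree $X$ has a pruned retract, unique up to isomorphism, whose isomorphism type is $\overline{X}$. $T^1(\Sigma)$ is the set of isomorphism types of pruned $\Sigma$-trees. Unpruned operations: $X\times Y$ identifies the end vertex of (a copy of) $X$ with the start vertex of (a disjoint copy of) $Y$, start vertex that of $X$, end vertex that of $Y$; $X^{(+)}$ is $X$ with end vertex moved to the start vertex; $X^{( * )}$ is $X$ with start vertex moved to the end vertex. Pruned operations: $XY=\overline{X\times Y}$, $X^+=\overline{X^{(+)}}$, $X^*=\overline{X^{( * )}}$. *)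

(* Defs.v *)
From Stdlib Require Import Relation_Operators.
From mathcomp Require Import all_boot.
Set Implicit Arguments. Unset Strict Implicit. Unset Printing Implicit Defensive.

Section Trees.
Variable S : Type.

Record tree := Tree {
  tV : finType;
  tE : finType;
  tsrc : tE -> tV;
  ttgt : tE -> tV;
  tlab : tE -> S;
  tstart : tV;
  tend : tV }.

Definition uadj (X : tree) (u v : tV X) : Prop :=
  exists e, (tsrc e = u /\ ttgt e = v) \/ (tsrc e = v /\ ttgt e = u).
Definition dadj (X : tree) (u v : tV X) : Prop :=
  exists e, tsrc e = u /\ ttgt e = v.

(* X is a Sigma-tree: underlying undirected (multi)graph is connected with
   |E| = |V| - 1 (i.e. a tree), and there is a directed path start -> end. *)
Definition is_tree (X : tree) : Prop :=
  [/\ #|tE X|.+1 = #|tV X|,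
      (forall v, @clos_refl_trans _ (@uadj X) (tstart X) v)
    & @clos_refl_trans _ (@dadj X) (tstart X) (tend X)].

Record hom (X Y : tree) := Hom {
  hv : tV X -> tV Y;
  he : tE X -> tE Y;
  hom_src : forall e, tsrc (he e) = hv (tsrc e);
  hom_tgt : forall e, ttgt (he e) = hv (ttgt e);
  hom_lab : forall e, tlab (he e) = tlab e;
  hom_start : hv (tstart X) = tstart Y;
  hom_end : hv (tend X) = tend Y }.

Definition is_iso (X Y : tree) (f : hom X Y) : Prop :=
  bijective (hv f) /\ bijective (he f).

Definition iso (X Y : tree) : Prop := exists f : hom X Y, is_iso f.

(* retraction = idempotent endomorphism *)
Definition idempotent (X : tree) (f : hom X X) : Prop :=
  (forall v, hv f (hv f v) = hv f v) /\ (forall e, he f (he f e) = he f e).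

Definition pruned (X : tree) : Prop :=
  forall f : hom X X, idempotent f ->
    (forall v, hv f v = v) /\ (forall e, he f e = e).

(* R is (isomorphic to) a retract of X: there are i : R -> X and r : X -> R
   with r o i = id; then i o r is a retraction of X with image iso to R. *)
Definition retract (R X : tree) : Prop :=
  exists (i : hom R X) (r : hom X R),
    (forall v, hv r (hv i v) = v) /\ (forall e, he r (he i e) = e).

(* equality of the pruned isomorphism types  overline(X) = overline(Y) *)
Definition core_eq (X Y : tree) : Prop :=
  exists P Q : tree, [/\ pruned P, retract P X, pruned Q, retract Q Y & iso P Q].

Definition embY (X Y : tree) (w : tV Y) : (tV X + {w : tV Y | w != tstart Y})%type :=
  match insub w with Some w' => inr w' | None => inl (tend X) end.

Definition tprod (X Y : tree) : tree :=
  @Tree (tV X + {w : tV Y | w != tstart Y})%type (tE X + tE Y)%type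
    (fun e => match e with inl e => inl (tsrc e) | inr e => embY X (tsrc e) end)
    (fun e => match e with inl e => inl (ttgt e) | inr e => embY X (ttgt e) end)
    (fun e => match e with inl e => tlab e | inr e => tlab e end)
    (inl (tstart X)) (embY X (tend Y)).

Definition tplus (X : tree) : tree :=
  @Tree (tV X) (tE X) (@tsrc X) (@ttgt X) (@tlab X) (tstart X) (tstart X).

Definition tstar (X : tree) : tree :=
  @Tree (tV X) (tE X) (@tsrc X) (@ttgt X) (@tlab X) (tend X) (tend X).

Definition in_T1 (X : tree) : Prop := is_tree X /\ pruned X.

End Trees.

(* Main.v *)
From Stdlib Require Import Relation_Operators Operators_Properties ZArith Lia Classical.
Require Import Defs.
From mathcomp Require Import all_boot zify.
Set Implicit Arguments. Unset Strict Implicit. Unset Printing Implicit Defensive.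

Section Core.
Variable S : Type.

Definition hcomp (X Y Z : tree S) (g : hom Y Z) (f : hom X Y) : hom X Z.
Proof.
refine (@Hom S X Z (fun v => hv g (hv f v)) (fun e => he g (he f e)) _ _ _ _ _).
- by move=> e; rewrite hom_src hom_src.
- by move=> e; rewrite hom_tgt hom_tgt.
- by move=> e; rewrite !hom_lab.
- by rewrite !hom_start.
- by rewrite !hom_end.
Defined.

Definition hid (X : tree S) : hom X X :=
  @Hom S X X id id (fun _ => erefl) (fun _ => erefl) (fun _ => erefl) erefl erefl.

Definition hiter (X : tree S) (h : hom X X) (m : nat) : hom X X.
Proof.
refine (@Hom S X X (iter m (hv h)) (iter m (he h)) _ _ _ _ _).
- by move=> e; elim: m => //= m IH; rewrite hom_src IH.
- by move=> e; elim: m => //= m IH; rewrite hom_tgt IH.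
- by move=> e; elim: m => //= m IH; rewrite hom_lab IH.
- by elim: m => //= m IH; rewrite IH hom_start.
- by elim: m => //= m IH; rewrite IH hom_end.
Defined.

Lemma pow_idem (T : finType) (u : T -> T) :
  exists m, 0 < m /\ forall x, iter (m + m) u x = iter m u x.
Proof.
pose N := #|{ffun T -> T}|.
pose F := fun i : 'I_N.+1 => [ffun x => iter i u x].
have [i [j [ij Fij]]] : exists i j : 'I_N.+1, i <> j /\ F i = F j.
  apply: NNPP => H.
  have injF : injective F.
    move=> i j E; apply: NNPP => ne; apply: H; by exists i, j.
  by move: (leq_card F injF); rewrite card_ord ltnn.
have key : forall a b : nat, a < b -> (forall x, iter a u x = iter b u x) ->
   exists m, 0 < m /\ forall x, iter (m + m) u x = iter m u x.
  move=> a b ab E.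
  pose p := b - a.
  have step : forall m x, a <= m -> iter (p + m) u x = iter m u x.
    move=> m x am.
    have -> : p + m = (m - a) + b by rewrite /p; lia.
    by rewrite iterD -E -iterD; congr iter; lia.
  have steps : forall t m x, a <= m -> iter (t * p + m) u x = iter m u x.
    move=> t m x am; elim: t => [|t IH] //.
    rewrite mulSn -addnA step; [exact IH | lia].
  have p0 : 0 < p by rewrite /p subn_gt0.
  exists (a.+1 * p); split; first by rewrite muln_gt0.
  move=> x; rewrite steps //.
  by apply: leq_trans (leqnSn a) _; rewrite leq_pmulr.
have Eij : forall x, iter i u x = iter j u x.
  by move=> x; have := congr1 (fun g : {ffun T -> T} => g x) Fij; rewrite !ffunE.
case: (ltngtP i j) => [lt|gt|eq].
- by apply: (key i j).
- by apply: (key j i) => // x; rewrite Eij.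
- by exfalso; apply: ij; apply: val_inj.
Qed.


Lemma endo_pow_id (P : tree S) (h : hom P P) : pruned P ->
  exists m, 0 < m /\ (forall v, iter m (hv h) v = v) /\ (forall e, iter m (he h) e = e).
Proof.
move=> prP.
pose u := fun x : (tV P + tE P)%type =>
  match x with inl v => inl (hv h v) | inr e => inr (he h e) end.
have [m [m0 Hm]] := pow_idem u.
have itl : forall k v, iter k u (inl v) = inl (iter k (hv h) v).
  by move=> k v; elim: k => //= k ->.
have itr : forall k e, iter k u (inr e) = inr (iter k (he h) e).
  by move=> k e; elim: k => //= k ->.
have idem : Defs.idempotent (hiter h m).
  split => [v|e] /=; rewrite -iterD.
  - by move: (Hm (inl v)); rewrite !itl => -[].
  - by move: (Hm (inr e)); rewrite !itr => -[].
have [Hv He] := prP _ idem.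
by exists m.
Qed.

Lemma bij_lr (T1 T2 : Type) (f : T1 -> T2) l r : cancel f l -> cancel r f -> bijective f.
Proof. move=> fl rf; exists l => // y; by rewrite -[y]rf fl. Qed.

Lemma core_uniq (P Q : tree S) : pruned P -> pruned Q -> hom P Q -> hom Q P -> iso P Q.
Proof.
move=> prP prQ f g.
have [m [m0 [Hmv Hme]]] := endo_pow_id (hcomp g f) prP.
have [n [n0 [Hnv Hne]]] := endo_pow_id (hcomp f g) prQ.
exists f; split.
- apply: (@bij_lr _ _ _ (fun y => iter m.-1 (hv (hcomp g f)) (hv g y))
                        (fun y => hv g (iter n.-1 (hv (hcomp f g)) y))).
  + move=> x /=; rewrite -[x in _ = x]Hmv -(prednK m0) iterSr //.
  + move=> y /=; rewrite -[y in _ = y]Hnv -(prednK n0) iterS //.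
- apply: (@bij_lr _ _ _ (fun y => iter m.-1 (he (hcomp g f)) (he g y))
                        (fun y => he g (iter n.-1 (he (hcomp f g)) y))).
  + move=> x /=; rewrite -[x in _ = x]Hme -(prednK m0) iterSr //.
  + move=> y /=; rewrite -[y in _ = y]Hne -(prednK n0) iterS //.
Qed.

Lemma iso_inv (P Q : tree S) : iso P Q -> inhabited (hom Q P).
Proof.
move=> [f [[gv fg gf] [ge fge gfe]]].
have fvi := can_inj fg.
constructor.
refine (@Hom S Q P gv ge _ _ _ _ _).
- by move=> e; apply: fvi; rewrite -hom_src !gf gfe.
- by move=> e; apply: fvi; rewrite -hom_tgt !gf gfe.
- by move=> e; rewrite -[in RHS](gfe e) hom_lab.
- by rewrite -(hom_start f) fg.
- by rewrite -(hom_end f) fg.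
Qed.

Lemma retract_trans (P Y X : tree S) : retract P Y -> retract Y X -> retract P X.
Proof.
move=> [i1 [r1 [H1v H1e]]] [i2 [r2 [H2v H2e]]].
exists (hcomp i2 i1), (hcomp r1 r2); split => /= [v|e]; by rewrite ?H2v ?H2e.
Qed.

Lemma retract_refl (X : tree S) : retract X X.
Proof. by exists (hid X), (hid X). Qed.

End Core.


Lemma card_lt_pred (T : finType) (P : pred T) x : ~~ P x -> #|[pred v | P v]| < #|T|.
Proof.
move=> nPx; rewrite -(cardC [pred v | P v]).
have : 0 < #|[predC [pred v | P v]]| by apply/card_gt0P; exists x; rewrite inE /= nPx.
move=> h; rewrite -[X in X < _]addn0 ltn_add2l //.
Qed.

Lemma card_le_pred (T : finType) (P : pred T) : #|[pred v | P v]| <= #|T|.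
Proof. exact: max_card. Qed.

Section Img.
Variable S : Type.
Variable X : tree S.
Variable f : hom X X.
Hypothesis idf : Defs.idempotent f.

Definition iV := {v : tV X | hv f v == v}.
Definition iE := {e : tE X | he f e == e}.

Definition mkV v (p : hv f v == v) : iV := exist (fun v => hv f v == v) v p.
Definition mkE e (p : he f e == e) : iE := exist (fun e => he f e == e) e p.

Lemma isrcP (e : iE) : hv f (tsrc (val e)) == tsrc (val e).
Proof. by rewrite -hom_src (eqP (valP e)). Qed.
Lemma itgtP (e : iE) : hv f (ttgt (val e)) == ttgt (val e).
Proof. by rewrite -hom_tgt (eqP (valP e)). Qed.
Lemma istartP : hv f (tstart X) == tstart X.
Proof. by rewrite hom_start. Qed.
Lemma iendP : hv f (tend X) == tend X.
Proof. by rewrite hom_end. Qed.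

Definition imgT : tree S :=
  @Tree S iV iE (fun e => mkV (isrcP e)) (fun e => mkV (itgtP e))
    (fun e => tlab (val e)) (mkV istartP) (mkV iendP).

Lemma img_retract : retract imgT X.
Proof.
have rvP : forall v, hv f (hv f v) == hv f v by move=> v; rewrite idf.1.
have reP : forall e, he f (he f e) == he f e by move=> e; rewrite idf.2.
pose i := @Hom S imgT X (fun v => val v) (fun e => val e)
   (fun _ => erefl) (fun _ => erefl) (fun _ => erefl) erefl erefl.
have rs : forall e, (mkV (isrcP (mkE (reP e))) : tV imgT) = mkV (rvP (tsrc e)).
  by move=> e; apply: val_inj => /=; rewrite hom_src.
have rt : forall e, (mkV (itgtP (mkE (reP e))) : tV imgT) = mkV (rvP (ttgt e)).
  by move=> e; apply: val_inj => /=; rewrite hom_tgt.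
have rst : (mkV (rvP (tstart X)) : tV imgT) = mkV istartP.
  by apply: val_inj => /=; rewrite hom_start.
have ren : (mkV (rvP (tend X)) : tV imgT) = mkV iendP.
  by apply: val_inj => /=; rewrite hom_end.
pose r := @Hom S X imgT (fun v => mkV (rvP v)) (fun e => mkE (reP e))
   rs rt (fun e => hom_lab f e) rst ren.
exists i, r; split => [v|e]; apply: val_inj => /=; [exact: (eqP (valP v)) | exact: (eqP (valP e))].
Qed.

Lemma img_card : ~ ((forall v, hv f v = v) /\ (forall e, he f e = e)) ->
  #|tV imgT| + #|tE imgT| < #|tV X| + #|tE X|.
Proof.
move=> nid.
rewrite /= /iV /iE !card_sig.
have := card_le_pred (fun v => hv f v == v).
have := card_le_pred (fun e => he f e == e).
case: (classic (exists v, hv f v <> v)) => [[v nv]|nv].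
  have := @card_lt_pred _ (fun v => hv f v == v) v (introN eqP nv).
  by move=> h1 h2 h3; rewrite -addSn; apply: leq_add.
case: (classic (exists e, he f e <> e)) => [[e ne]|ne].
  have := @card_lt_pred _ (fun e => he f e == e) e (introN eqP ne).
  by move=> h1 h2 h3; rewrite -addnS; apply: leq_add.
exfalso; apply: nid; split => [v|e]; apply: NNPP => H.
- by apply: nv; exists v.
- by apply: ne; exists e.
Qed.

End Img.

Lemma core_exists (S : Type) (X : tree S) : exists P, pruned P /\ retract P X.
Proof.
move: {2}(#|tV X| + #|tE X|) (leqnn (#|tV X| + #|tE X|)) => n.
elim: n X => [|n IH] X hn.
- have : 0 < #|tV X| by apply/card_gt0P; exists (tstart X).
  lia.
case: (classic (pruned X)) => [pX|npX].
  by exists X; split => //; apply: retract_refl.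
have [g [ig nid]] : exists g : hom X X, Defs.idempotent g /\
    ~ ((forall v, hv g v = v) /\ (forall e, he g e = e)).
  apply: NNPP => H; apply: npX => g ig; apply: NNPP => H2; apply: H; by exists g.
have [P [pP rP]] := IH (imgT g) (leq_trans (img_card nid) hn).
exists P; split => //; exact: retract_trans rP (img_retract ig).
Qed.


Section Prod.
Variable S : Type.
Implicit Types A B C D P Q X Y : tree S.

Lemma core_eq_iff X Y : core_eq X Y <-> inhabited (hom X Y) /\ inhabited (hom Y X).
Proof.
split.
- move=> [P [Q [pP [i1 [r1 _]] pQ [i2 [r2 _]] isoPQ]]].
  have [g] := iso_inv isoPQ.
  case: isoPQ => f _.
  split; constructor.
  + exact: hcomp i2 (hcomp f r1).
  + exact: hcomp i1 (hcomp g r2).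
- move=> [[h] [k]].
  have [P [pP rP]] := core_exists X.
  have [Q [pQ rQ]] := core_exists Y.
  exists P, Q; split => //.
  case: rP => [i1 [r1 _]]; case: rQ => [i2 [r2 _]].
  apply: core_uniq => //.
  + exact: hcomp r2 (hcomp h i1).
  + exact: hcomp r1 (hcomp k i2).
Qed.

Lemma embYP A Y (y : tV Y) :
  (y = tstart Y /\ embY A y = inl (tend A)) \/
  (exists w : {w : tV Y | w != tstart Y}, val w = y /\ embY A y = inr w).
Proof.
rewrite /embY; case: insubP => [w _ <-|H].
- by right; exists w.
- by left; move: H; rewrite negbK => /eqP ->.
Qed.

Lemma embY_start A Y : embY A (tstart Y) = inl (tend A).
Proof. by case: (embYP A (tstart Y)) => [[_ ->] // | [w [wv _]]]; move: (valP w); rewrite wv eqxx. Qed.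

Definition mvr A P Q (f : hom P Q) (x : tV (tprod A P)) : tV (tprod A Q) :=
  match x with inl a => inl a | inr w => embY A (hv f (val w)) end.

Lemma mvr_emb A P Q (f : hom P Q) y : mvr f (embY A y) = embY A (hv f y).
Proof.
case: (embYP A y) => [[-> ->]|[w [<- ->]]] //=.
by rewrite hom_start embY_start.
Qed.

Definition prod_map_r A P Q (f : hom P Q) : hom (tprod A P) (tprod A Q).
Proof.
refine (@Hom S (tprod A P) (tprod A Q) (mvr f)
  (fun e => match e with inl e => inl e | inr e => inr (he f e) end) _ _ _ _ _).
- by case=> e //=; rewrite hom_src mvr_emb.
- by case=> e //=; rewrite hom_tgt mvr_emb.
- by case=> e //=; rewrite hom_lab.
- by [].
- by rewrite /= mvr_emb hom_end.
Defined.

Definition mvl A B Y (f : hom A B) (x : tV (tprod A Y)) : tV (tprod B Y) :=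
  match x with inl a => inl (hv f a) | inr w => inr w end.

Lemma mvl_emb A B Y (f : hom A B) (y : tV Y) : mvl f (embY A y) = embY B y.
Proof.
case: (embYP A y) => [[-> ->]|[w [wy ->]]] /=.
- by rewrite hom_end embY_start.
- case: (embYP B y) => [[yst _]|[w' [w'y ->]]].
  + by move: (valP w); rewrite wy yst eqxx.
  + by congr inr; apply: val_inj; rewrite wy w'y.
Qed.

Definition prod_map_l A B Y (f : hom A B) : hom (tprod A Y) (tprod B Y).
Proof.
refine (@Hom S (tprod A Y) (tprod B Y) (mvl f)
  (fun e => match e with inl e => inl (he f e) | inr e => inr e end) _ _ _ _ _).
- by case=> e /=; rewrite ?hom_src ?mvl_emb.
- by case=> e /=; rewrite ?hom_tgt ?mvl_emb.
- by case=> e //=; rewrite hom_lab.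
- by rewrite /= hom_start.
- by rewrite /= mvl_emb.
Defined.

End Prod.


Section Easy.
Variable S : Type.
Implicit Types A B C D P Q X Y : tree S.

Section K1.
Variables A B X : tree S.
Variable g : hom (tprod A (tplus X)) (tprod B (tplus X)).

Definition m1 (x : tV (tprod A X)) : tV (tprod B X) :=
  match x with inl a => hv g (inl a) | inr w => inr w end.

Lemma g_end1 : hv g (inl (tend A)) = inl (tend B).
Proof.
have := hom_end g; rewrite /=.
by rewrite (embY_start A (tplus X)) (embY_start B (tplus X)).
Qed.

Lemma m1_emb (y : tV X) : m1 (embY A y) = embY B y.
Proof.
case: (embYP A y) => [[-> ->]|[w [wy ->]]] /=.
- by rewrite g_end1 embY_start.
- case: (embYP B y) => [[yst _]|[w' [w'y ->]]].
  + by move: (valP w); rewrite wy yst eqxx.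
  + by congr inr; apply: val_inj; rewrite wy w'y.
Qed.

Definition K1 : hom (tprod A X) (tprod B X).
Proof.
refine (@Hom S (tprod A X) (tprod B X) m1
  (fun e => match e with inl e => he g (inl e) | inr e => inr e end) _ _ _ _ _).
- case=> e; [exact: (hom_src g (inl e)) | by rewrite /= m1_emb].
- case=> e; [exact: (hom_tgt g (inl e)) | by rewrite /= m1_emb].
- case=> e; [exact: (hom_lab g (inl e)) | by []].
- by rewrite /= (hom_start g).
- by rewrite /= m1_emb.
Defined.
End K1.

Section K2.
Variables A B X : tree S.
Variable g : hom (tprod (tstar X) A) (tprod (tstar X) B).

Definition m2 (x : tV (tprod X A)) : tV (tprod X B) :=
  match x with inl a => inl a | inr w => hv g (inr w) end.

Lemma m2_emb (y : tV A) : m2 (embY X y) = hv g (embY X y).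
Proof.
case: (embYP X y) => [[-> ->]|[w [wy ->]]] //=.
by have := hom_start g.
Qed.

Definition K2 : hom (tprod X A) (tprod X B).
Proof.
refine (@Hom S (tprod X A) (tprod X B) m2
  (fun e => match e with inl e => inl e | inr e => he g (inr e) end) _ _ _ _ _).
- case=> e //; rewrite /= m2_emb; exact: (hom_src g (inr e)).
- case=> e //; rewrite /= m2_emb; exact: (hom_tgt g (inr e)).
- case=> e; [by [] | exact: (hom_lab g (inr e))].
- by [].
- rewrite /= m2_emb; exact: (hom_end g).
Defined.
End K2.

End Easy.


Section Pot.
Variable S : Type.
Variable T : tree S.
Hypothesis hcard : #|tE T|.+1 = #|tV T|.
Hypothesis hconn : forall v, @clos_refl_trans _ (@uadj S T) (tstart T) v.

Notation s := (tstart T).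

Definition joinsb (e : tE T) (u v : tV T) : bool :=
  ((tsrc e == u) && (ttgt e == v)) || ((tsrc e == v) && (ttgt e == u)).
Definition uadjb (u v : tV T) : bool := [exists e, joinsb e u v].

Fixpoint reachb (n : nat) (v : tV T) : bool :=
  match n with 0 => v == s | n'.+1 => [exists u, reachb n' u && uadjb u v] end.

Lemma reach_ex v : exists n, reachb n v.
Proof.
have := clos_rt_rtn1 _ _ _ _ (hconn v).
elim=> [|y z [e He] _ [n IH]]; first by exists 0 => /=.
exists n.+1 => /=; apply/existsP; exists y; rewrite IH /=.
apply/existsP; exists e; rewrite /joinsb.
by case: He => -[-> ->]; rewrite !eqxx ?orbT.
Qed.

Definition d v := ex_minn (reach_ex v).

Lemma d_reach v : reachb (d v) v.
Proof. by rewrite /d; case: ex_minnP. Qed.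
Lemma d_min v n : reachb n v -> d v <= n.
Proof. by rewrite /d; case: ex_minnP => m _ H /H. Qed.

Lemma d_s : d s = 0.
Proof. by apply/eqP; rewrite -leqn0; apply: d_min => /=. Qed.

Lemma par_ex v : v != s -> exists u, ((d u).+1 == d v) && uadjb u v.
Proof.
move=> nvs; have := d_reach v.
case E: (d v) => [|m] /=; first by move/eqP => vs; rewrite vs eqxx in nvs.
case/existsP => u /andP [Ru Auv]; exists u; rewrite Auv andbT.
have dum : d u <= m by apply: d_min.
have : d v <= (d u).+1.
  apply: d_min => /=; apply/existsP; exists u; by rewrite d_reach.
rewrite E ltnS => mdu.
by rewrite eqSS eqn_leq dum mdu.
Qed.

Definition par v : tV T := odflt v [pick u | ((d u).+1 == d v) && uadjb u v].

Lemma par_spec v : v != s -> (d (par v)).+1 = d v /\ uadjb (par v) v.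
Proof.
move=> nvs; rewrite /par; case: pickP => [u /andP [/eqP -> ->] //|H].
by have [u] := par_ex nvs; rewrite H.
Qed.

Definition pe v : option (tE T) := [pick e | joinsb e (par v) v].

Lemma pe_spec v : v != s -> exists e, pe v = Some e /\ joinsb e (par v) v.
Proof.
move=> nvs; have [_ /existsP [e He]] := par_spec nvs.
rewrite /pe; case: pickP => [e' He'|H]; first by exists e'.
by rewrite H in He.
Qed.

Lemma par_neq v : v != s -> par v != v.
Proof.
move=> nvs; have [dp _] := par_spec nvs.
by apply/eqP => E; rewrite E in dp; move: dp; lia.
Qed.

Lemma pe_inj : {in [set~ s] &, injective pe}.
Proof.
move=> v w; rewrite !in_setC1 => nv nw E.
have [e [Ev Jv]] := pe_spec nv.
have [e' [Ew Jw]] := pe_spec nw.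
rewrite Ev Ew in E; case: E => E; subst e'.
have [dv _] := par_spec nv; have [dw _] := par_spec nw.
move: Jv Jw; rewrite /joinsb.
case/orP => /andP [/eqP s1 /eqP t1]; case/orP => /andP [/eqP s2 /eqP t2].
- by rewrite -t1 -t2.
- have pw : par w = v by rewrite -t2 t1.
  have pv : par v = w by rewrite -s1 s2.
  by move: dv dw; rewrite pw pv; lia.
- have pw : par w = v by rewrite -s2 s1.
  have pv : par v = w by rewrite -t1 t2.
  by move: dv dw; rewrite pw pv; lia.
- by rewrite -s1 -s2.
Qed.

Lemma pe_onto e : exists v, v != s /\ pe v = Some e.
Proof.
pose A := [set~ s].
pose I := [set pe v | v in A].
pose B := [set Some e | e : tE T].
have cI : #|I| = #|tE T| by rewrite card_in_imset; [rewrite cardsC1 -hcard | exact: pe_inj].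
have cB : #|B| = #|tE T| by rewrite card_imset ?cardsT //; move=> x y [].
have sIB : I \subset B.
  apply/subsetP => o /imsetP [v]; rewrite in_setC1 => nv ->.
  by have [e' [-> _]] := pe_spec nv; apply: imset_f.
have : Some e \in I.
  by rewrite (subset_cardP (etrans cI (esym cB)) sIB); apply: imset_f.
by case/imsetP => v; rewrite in_setC1 => nv E; exists v.
Qed.

Fixpoint phi (n : nat) (v : tV T) : Z :=
  match n with
  | 0 => 0%Z
  | n'.+1 => match pe v with
             | Some e => if ttgt e == v then (phi n' (par v) + 1)%Z else (phi n' (par v) - 1)%Z
             | None => 0%Z end
  end.

Definition pot (v : tV T) : Z := phi (d v) v.

Lemma pot_edge e : pot (ttgt e) = (pot (tsrc e) + 1)%Z.
Proof.
have [v [nv Ev]] := pe_onto e.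
have [dv _] := par_spec nv.
have J' : joinsb e (par v) v.
  by have [e' [E' J'']] := pe_spec nv; rewrite Ev in E'; case: E' => ->.
have pn := par_neq nv.
have Hp : pot v = match pe v with
             | Some e => if ttgt e == v then (pot (par v) + 1)%Z else (pot (par v) - 1)%Z
             | None => 0%Z end.
  by rewrite /pot -dv.
rewrite Ev in Hp.
move: J'; rewrite /joinsb; case/orP => /andP [/eqP s1 /eqP t1].
- by rewrite t1 s1 Hp t1 eqxx.
- rewrite t1 s1 Hp.
  have -> : (ttgt e == v) = false by rewrite t1; exact: negbTE.
  lia.
Qed.

Lemma pot_s : pot s = 0%Z.
Proof. by rewrite /pot d_s. Qed.

End Pot.

Lemma pot_exists (S : Type) (T : tree S) : is_tree T ->
  exists phi : tV T -> Z, phi (tstart T) = 0%Z /\ forall e, phi (ttgt e) = (phi (tsrc e) + 1)%Z.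
Proof.
case=> hc hconn _.
by exists (pot hconn); split; [exact: pot_s | exact: pot_edge hc hconn].
Qed.


Section G.
Variable S : Type.
Implicit Types A B C D : tree S.

Definition potf (T : tree S) (phi : tV T -> Z) := forall e, phi (ttgt e) = (phi (tsrc e) + 1)%Z.
Definition conn (T : tree S) := forall v, @clos_refl_trans _ (@uadj S T) (tstart T) v.
Definition dreach (T : tree S) (u v : tV T) := @clos_refl_trans _ (@dadj S T) u v.

Lemma crt_map (X Y : Type) (R : X -> X -> Prop) (R' : Y -> Y -> Prop) (m : X -> Y) :
  (forall u v, R u v -> R' (m u) (m v)) ->
  forall x y, clos_refl_trans _ R x y -> clos_refl_trans _ R' (m x) (m y).
Proof.
move=> H x y; elim=> [u v /H|u|u v w _ IH1 _ IH2].
- by apply: rt_step.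
- by apply: rt_refl.
- exact: rt_trans IH1 IH2.
Qed.

Lemma hom_pot (T1 T2 : tree S) (f : hom T1 T2) phi1 phi2 :
  conn T1 -> potf phi1 -> potf phi2 -> phi2 (hv f (tstart T1)) = phi1 (tstart T1) ->
  forall v, phi2 (hv f v) = phi1 v.
Proof.
move=> c p1 p2 h0 v; have := clos_rt_rtn1 _ _ _ _ (c v).
elim=> // y z [e [[s t]|[s t]]] _ IH; subst.
- by rewrite -hom_tgt p2 hom_src IH p1.
- move: (p2 (he f e)) (p1 e); rewrite hom_tgt hom_src IH; lia.
Qed.

Lemma dreach_pot (T : tree S) phi (u v : tV T) : potf phi -> dreach u v ->
  u = v \/ (phi u < phi v)%Z.
Proof.
move=> p; elim=> [x y [e [s t]]|x|x y z _ IH1 _ IH2].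
- by right; subst; rewrite p; lia.
- by left.
- case: IH1 => [->|h1]; first by [].
  by case: IH2 => [<-|h2]; right => //; lia.
Qed.

Lemma hom_dreach (T1 T2 : tree S) (f : hom T1 T2) u v : dreach u v -> dreach (hv f u) (hv f v).
Proof.
apply: crt_map => x y [e [s t]]; exists (he f e); by rewrite hom_src hom_tgt s t.
Qed.

Lemma embY_val A C (w : {w : tV C | w != tstart C}) : embY A (val w) = inr w.
Proof.
case: (embYP A (val w)) => [[st _]|[w' [ww ->]]].
- by move: (valP w); rewrite st eqxx.
- by congr inr; apply: val_inj.
Qed.

Section ProdPot.
Variables A C : tree S.
Variables (phiA : tV A -> Z) (phiC : tV C -> Z).
Hypotheses (pA : potf phiA) (pC : potf phiC) (pC0 : phiC (tstart C) = 0%Z).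

Definition Phi (x : tV (tprod A C)) : Z :=
  match x with inl a => phiA a | inr w => (phiA (tend A) + phiC (val w))%Z end.

Lemma Phi_emb y : Phi (embY A y) = (phiA (tend A) + phiC y)%Z.
Proof. case: (embYP A y) => [[-> ->]|[w [<- ->]]] //=; rewrite pC0; lia. Qed.

Lemma Phi_pot : potf Phi.
Proof.
case=> e /=; first exact: pA.
by rewrite !Phi_emb pC; lia.
Qed.
End ProdPot.

Lemma prod_conn A C : conn A -> conn C -> conn (tprod A C).
Proof.
move=> cA cC [a|w].
- apply: (crt_map (m := inl) _ (cA a)) => u v [e H]; exists (inl e); case: H => -[<- <-]; [left|right]; done.
- apply: rt_trans (_ : @clos_refl_trans _ (@uadj S (tprod A C)) (inl (tend A)) _).
  + apply: (crt_map (m := inl) _ (cA (tend A))) => u v [e H]; exists (inl e);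
      case: H => -[<- <-]; [left|right]; done.
  + rewrite -(embY_start A C) -embY_val.
    apply: (crt_map (m := @embY S A C) _ (cC (val w))) => u v [e H]; exists (inr e);
      case: H => -[<- <-]; [left|right]; done.
Qed.

Lemma prod_dpA A C : dreach (tstart A) (tend A) ->
  dreach (T := tprod A C) (inl (tstart A)) (inl (tend A)).
Proof.
apply: (crt_map (m := inl)) => u v [e [<- <-]]; by exists (inl e).
Qed.

Lemma prod_dpC A C : dreach (tstart C) (tend C) ->
  dreach (T := tprod A C) (inl (tend A)) (tend (tprod A C)).
Proof.
move=> H; rewrite /= -(embY_start A C).
apply: (crt_map (m := @embY S A C) _ H) => u v [e [<- <-]]; by exists (inr e).
Qed.

Lemma cut B D (u y : tV (tprod B D)) : dreach u y ->
  (exists a, u = inl a) -> (exists w, y = inr w) ->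
  dreach u (inl (tend B) : tV (tprod B D)) /\ dreach (inl (tend B) : tV (tprod B D)) y.
Proof.
move=> H; have := clos_rt_rt1n _ _ _ _ H.
elim=> [x [a ->] [w] //|x u' z [e [s t]] Hz IH [a xa] [w zw]].
case: u' t Hz IH => [a'|w'] t Hz IH.
- have [h1 h2] := IH (ex_intro _ a' erefl) (ex_intro _ w zw).
  split=> //; apply: rt_trans h1; apply: rt_step; by exists e.
- have xB : x = inl (tend B).
    case: e s t => e /= s t; first by [].
    rewrite xa in s *; case: (embYP B (tsrc e)) s => [[_ ->]|[w'' [_ ->]]] //.
  split; first by rewrite xB; apply: rt_refl.
  rewrite -xB; apply: rt_trans (rt_step _ _ _ _ _) (clos_rt1n_rt _ _ _ _ Hz).
  by exists e.
Qed.

Lemma glue_fix A B C D (phiA : tV A -> Z) phiB phiC phiD :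
  potf phiA -> potf phiB -> potf phiC -> potf phiD ->
  phiA (tstart A) = 0%Z -> phiB (tstart B) = 0%Z ->
  phiC (tstart C) = 0%Z -> phiD (tstart D) = 0%Z ->
  conn A -> conn C -> dreach (tstart A) (tend A) -> dreach (tstart C) (tend C) ->
  phiA (tend A) = phiB (tend B) ->
  forall f : hom (tprod A C) (tprod B D), hv f (inl (tend A)) = inl (tend B).
Proof.
move=> pA pB pC pD pA0 pB0 pC0 pD0 cA cC dA dC hAB f.
pose P1 := Phi phiA phiC. pose P2 := Phi phiB phiD.
have HP : forall v, P2 (hv f v) = P1 v.
  apply: hom_pot; [exact: prod_conn | exact: Phi_pot | exact: Phi_pot |].
  by rewrite (hom_start f) /P1 /P2 /= pA0 pB0.
have hg : P2 (hv f (inl (tend A))) = P2 (inl (tend B)) by rewrite HP /P1 /P2 /= hAB.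
have d1 := hom_dreach f (prod_dpA C dA).
have d2 := hom_dreach f (prod_dpC A dC).
rewrite (hom_start f) in d1; rewrite (hom_end f) in d2.
case E: (hv f (inl (tend A))) hg d1 d2 => [v|w] hg d1 d2.
- have d3 : dreach (T := tprod B D) (inl v) (inl (tend B)).
    move: d2; rewrite /=.
    case: (embYP B (tend D)) => [[_ ->]//|[w [_ ->]] d2].
    by have [] := cut d2 (ex_intro _ v erefl) (ex_intro _ w erefl).
  have := dreach_pot (Phi_pot pB pD pD0) d3.
  case=> // h; rewrite /P2 in hg; lia.
- have [_ d3] := cut d1 (ex_intro _ _ erefl) (ex_intro _ w erefl).
  have := dreach_pot (Phi_pot pB pD pD0) d3.
  case=> // h; rewrite /P2 in hg; lia.
Qed.

End G.


Section Main.
Variable S : Type.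

Definition K3 (A B X : tree S) (f : hom (tprod A X) (tprod B X))
  (H : hv f (inl (tend A)) = inl (tend B)) : hom (tprod A (tplus X)) (tprod B (tplus X)).
Proof.
refine (@Hom S (tprod A (tplus X)) (tprod B (tplus X)) (hv f) (he f)
   (hom_src f) (hom_tgt f) (hom_lab f) (hom_start f) _).
by rewrite /= (embY_start A (tplus X)) (embY_start B (tplus X)).
Defined.

Definition K4 (A B X : tree S) (f : hom (tprod X A) (tprod X B))
  (H : hv f (inl (tend X)) = inl (tend X)) : hom (tprod (tstar X) A) (tprod (tstar X) B) :=
  @Hom S (tprod (tstar X) A) (tprod (tstar X) B) (hv f) (he f)
   (hom_src f) (hom_tgt f) (hom_lab f) H (hom_end f).

Lemma tree_data (T : tree S) : is_tree T ->
  exists phi : tV T -> Z, [/\ potf phi, phi (tstart T) = 0%Z, conn T & dreach (tstart T) (tend T)].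
Proof.
move=> tT; have [phi [p0 pe]] := pot_exists tT.
case: tT => _ c d; by exists phi.
Qed.

Lemma dir1 (A B X : tree S) : is_tree A -> is_tree B -> is_tree X ->
  hom (tprod A X) (tprod B X) -> inhabited (hom (tprod A (tplus X)) (tprod B (tplus X))).
Proof.
move=> tA tB tX f.
have [pA [ppA pA0 cA dA]] := tree_data tA.
have [pB [ppB pB0 cB dB]] := tree_data tB.
have [pX [ppX pX0 cX dX]] := tree_data tX.
have hAB : pA (tend A) = pB (tend B).
  have H0 : Phi pB pX (hv f (tstart (tprod A X))) = Phi pA pX (tstart (tprod A X)).
    by rewrite (hom_start f) /= pA0 pB0.
  have := hom_pot (f := f) (prod_conn cA cX)
     (Phi_pot ppA ppX pX0) (Phi_pot ppB ppX pX0) H0 (tend (tprod A X)).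
  rewrite (hom_end f) /= !Phi_emb //; lia.
constructor; apply: (K3 (f := f)).
exact: (glue_fix ppA ppB ppX ppX pA0 pB0 pX0 pX0 cA cX dA dX hAB f).
Qed.

Lemma dir2 (A B X : tree S) : is_tree A -> is_tree B -> is_tree X ->
  hom (tprod X A) (tprod X B) -> inhabited (hom (tprod (tstar X) A) (tprod (tstar X) B)).
Proof.
move=> tA tB tX f.
have [pA [ppA pA0 cA dA]] := tree_data tA.
have [pB [ppB pB0 cB dB]] := tree_data tB.
have [pX [ppX pX0 cX dX]] := tree_data tX.
constructor; apply: (K4 (f := f)).
exact: (glue_fix ppX ppX ppA ppB pX0 pX0 pA0 pB0 cX cA dX dA erefl f).
Qed.

Lemma part1 (A B X P : tree S) : is_tree A -> is_tree B -> is_tree X ->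
  retract P (tplus X) ->
  inhabited (hom (tprod A X) (tprod B X)) <-> inhabited (hom (tprod A P) (tprod B P)).
Proof.
move=> tA tB tX [i [r _]]; split.
- move=> [f]; have [g] := dir1 tA tB tX f.
  constructor; exact: hcomp (prod_map_r B r) (hcomp g (prod_map_r A i)).
- move=> [g]; constructor; apply: K1.
  exact: hcomp (prod_map_r B i) (hcomp g (prod_map_r A r)).
Qed.

Lemma part2 (A B X Q : tree S) : is_tree A -> is_tree B -> is_tree X ->
  retract Q (tstar X) ->
  inhabited (hom (tprod X A) (tprod X B)) <-> inhabited (hom (tprod Q A) (tprod Q B)).
Proof.
move=> tA tB tX [i [r _]]; split.
- move=> [f]; have [g] := dir2 tA tB tX f.
  constructor; exact: hcomp (prod_map_l B r) (hcomp g (prod_map_l A i)).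
- move=> [g]; constructor; apply: K2.
  exact: hcomp (prod_map_l B i) (hcomp g (prod_map_l A r)).
Qed.

End Main.

Theorem proposition4p9 (S : Type) (A B X : tree S) :
  in_T1 A -> in_T1 B -> in_T1 X ->
  (forall P : tree S, pruned P -> retract P (tplus X) ->
     (core_eq (tprod A X) (tprod B X) <-> core_eq (tprod A P) (tprod B P))) /\
  (forall Q : tree S, pruned Q -> retract Q (tstar X) ->
     (core_eq (tprod X A) (tprod X B) <-> core_eq (tprod Q A) (tprod Q B))).
Proof.
move=> [tA _] [tB _] [tX _]; split.
- move=> P _ rP; rewrite !core_eq_iff.
  by rewrite (part1 tA tB tX rP) (part1 tB tA tX rP).
- move=> Q _ rQ; rewrite !core_eq_iff.
  by rewrite (part2 tA tB tX rQ) (part2 tB tA tX rQ).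
Qed.
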